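(* Let $G$ be a unimodular locally compact group with Haar measure $m$, and let $\nu$ be a Delone measure on $G$. Let $B_l,B_u\subseteq G$ be compact symmetric unit neighborhoods and $C_l,C_u$ positive finite constants with $C_l\le \nu(B_lx)$ and $\nu(B_u^2x)\le C_u$ for all $x\in G$. Then \[ \frac{C_l}{m(B_l^{2})}\cdot I(G)\le \mathrm{L}_\nu^-\le \frac{C_u}{m(B_u)}\cdot I(G), \qquad \frac{C_l}{m(B_l^{2})}\cdot I(G)^{-1} \le \mathrm{L}_\nu^+\le \frac{C_u}{m(B_u)} \cdot I(G)^{-1}. \]
   Context: A measure is a positive Borel measure. $\nu$ is upper translation bounded if $\sup_{x\in G}\nu(B_ux)<\infty$ for some compact symmetric unit neighborhood $B_u$, lower translation bounded if $\inf_{x\in G}\nu(B_lx)>0$ for some compact symmetric unit neighborhood $B_l$, and a Delone measure if both. $\mathcal K$: nonempty compact subsets of $G$; $\mathcal K_p$: those of positive Haar measure. $I(G)=\sup_{K\in \mathcal K}\inf_{A\in \mathcal K_p} m(KA)/m(A)\in[1,\infty]$, with $1/\infty=0$. $\mathrm{L}_\nu^-=\sup_{K\in \mathcal K}\inf_{A\in \mathcal K_p} \nu(KA)/m(A)$, $\mathrm{L}_\nu^+=\inf_{K\in \mathcal K}\sup_{A\in \mathcal K_p} \nu(A)/m(KA)$. $B^2=BB$. *)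

(* Defs.v *)
From HB Require Import structures.
From mathcomp Require Import all_boot all_order all_algebra.
From mathcomp Require Import all_classical all_reals all_analysis.
Set Implicit Arguments. Unset Strict Implicit. Unset Printing Implicit Defensive.
Import Order.TTheory GRing.Theory Num.Theory.
Local Open Scope classical_set_scope.
Local Open Scope ring_scope.

Definition is_lc_group (G : ptopologicalType) (mul : G -> G -> G) (inv : G -> G)
    (e : G) : Prop :=
  [/\ (forall x y z, mul x (mul y z) = mul (mul x y) z),
      (forall x, mul e x = x /\ mul x e = x /\
                 mul (inv x) x = e /\ mul x (inv x) = e),
      (continuous (fun p : G * G => mul p.1 p.2) /\ continuous inv),
      hausdorff_space G &
      locally_compact [set: G]].

Definition borelG (G : ptopologicalType) := g_sigma_algebraType (@open G).

Definition setmul (G : Type) (mul : G -> G -> G) (A B : set G) : set G :=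
  [set mul a b | a in A & b in B].
Definition rtrans (G : Type) (mul : G -> G -> G) (A : set G) (x : G) : set G :=
  [set mul a x | a in A].
Definition ltrans (G : Type) (mul : G -> G -> G) (x : G) (A : set G) : set G :=
  [set mul x a | a in A].

Definition haar_measure (R : realType) (G : ptopologicalType)
    (mul : G -> G -> G) (m : set (borelG G) -> \bar R) : Prop :=
  [/\ (forall (x : G) (A : set (borelG G)), measurable A ->
         m (ltrans mul x A) = m A),
      (forall K : set G, compact K -> (m K < +oo)%E),
      (forall U : set G, open U -> U !=set0 -> (0 < m U)%E),
      (forall A : set (borelG G), measurable A ->
         m A = ereal_inf [set m U | U in (fun U : set G => open U /\ A `<=` U)]) &
      (forall U : set G, open U ->
         m U = ereal_sup [set m K | K in (fun K : set G => compact K /\ K `<=` U)])].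

Definition unimodular (R : realType) (G : ptopologicalType)
    (mul : G -> G -> G) (m : set (borelG G) -> \bar R) : Prop :=
  forall (x : G) (A : set (borelG G)), measurable A -> m (rtrans mul A x) = m A.

Definition csun (G : ptopologicalType) (inv : G -> G) (e : G) (B : set G) : Prop :=
  [/\ compact B, inv @` B = B & nbhs e B].

Definition upper_translation_bounded (R : realType) (G : ptopologicalType)
    (mul : G -> G -> G) (inv : G -> G) (e : G) (nu : set (borelG G) -> \bar R) :=
  exists Bu : set G, csun inv e Bu /\
    (ereal_sup [set nu (rtrans mul Bu x) | x in [set: G]] < +oo)%E.

Definition lower_translation_bounded (R : realType) (G : ptopologicalType)
    (mul : G -> G -> G) (inv : G -> G) (e : G) (nu : set (borelG G) -> \bar R) :=
  exists Bl : set G, csun inv e Bl /\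
    (0 < ereal_inf [set nu (rtrans mul Bl x) | x in [set: G]])%E.

Definition delone_measure (R : realType) (G : ptopologicalType)
    (mul : G -> G -> G) (inv : G -> G) (e : G) (nu : set (borelG G) -> \bar R) :=
  upper_translation_bounded mul inv e nu /\ lower_translation_bounded mul inv e nu.

Definition cK (G : ptopologicalType) : set (set G) :=
  [set K | compact K /\ K !=set0].
Definition cKp (R : realType) (G : ptopologicalType) (m : set (borelG G) -> \bar R)
  : set (set G) := [set A | compact A /\ (0 < m A)%E].

Definition IG (R : realType) (G : ptopologicalType) (mul : G -> G -> G)
    (m : set (borelG G) -> \bar R) : \bar R :=
  ereal_sup [set ereal_inf [set (m (setmul mul K A) * inve (m A))%E | A in cKp m]
            | K in @cK G].

Definition Lminus (R : realType) (G : ptopologicalType) (mul : G -> G -> G)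
    (m nu : set (borelG G) -> \bar R) : \bar R :=
  ereal_sup [set ereal_inf [set (nu (setmul mul K A) * inve (m A))%E | A in cKp m]
            | K in @cK G].

Definition Lplus (R : realType) (G : ptopologicalType) (mul : G -> G -> G)
    (m nu : set (borelG G) -> \bar R) : \bar R :=
  ereal_inf [set ereal_sup [set (nu A * inve (m (setmul mul K A)))%E | A in cKp m]
            | K in @cK G].

(* Main.v *)
Require Import Defs.
From HB Require Import structures.
From mathcomp Require Import all_boot all_order all_algebra.
From mathcomp Require Import all_classical all_reals all_analysis.
Import Order.TTheory GRing.Theory Num.Theory.
Local Open Scope classical_set_scope.
Local Open Scope ring_scope.

Section Ereal.
Variable R : realType.
Local Open Scope ereal_scope.

Lemma cinvE (c : R) (x : \bar R) : (0 < c)%R -> c%:E * x^-1 = (c^-1%:E * x)^-1.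
Proof.
move=> c0; rewrite inveM; last first.
  rewrite /inveM_def; case: x => [r||]//=; rewrite ?invr_gt0 //.
  by rewrite invr_eq0 gt_eqF //= invr_ge0 ltW // implybT.
by rewrite inver invr_eq0 gt_eqF // invrK.
Qed.

Lemma gal (c : R) (L x : \bar R) : (0 < c)%R -> 0 <= L -> 0 <= x ->
  (L <= c%:E * x^-1) = (x <= c%:E * L^-1).
Proof.
move=> c0 L0 x0; rewrite cinvE // inve_pge ?inE //; last first.
  by rewrite mule_ge0 // lee_fin invr_ge0 ltW.
by rewrite lee_pdivrMl.
Qed.

Lemma gal2 (c : R) (D x : \bar R) : (0 < c)%R -> 0 <= D -> 0 <= x ->
  (c%:E * x^-1 <= D) = (c%:E * D^-1 <= x).
Proof.
move=> c0 D0 x0; rewrite cinvE // inve_ple ?inE //; last first.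
  by rewrite mule_ge0 // lee_fin invr_ge0 ltW.
by rewrite lee_pdivlMl // -cinvE.
Qed.

Lemma inve_anti (x y : \bar R) : 0 <= x -> x <= y -> y^-1 <= x^-1.
Proof.
move=> x0 xy; rewrite lee_pV2 ?inE //; exact: le_trans xy.
Qed.

Lemma invEpos (r : R) : (0 < r)%R -> r%:E^-1 = r^-1%:E.
Proof. by move=> r0; rewrite inver gt_eqF. Qed.

End Ereal.
Arguments cinvE {R}. Arguments gal {R}. Arguments gal2 {R}.
Arguments inve_anti {R}. Arguments invEpos {R}.

Section Grp.
Variables (R : realType) (G : ptopologicalType)
    (mul : G -> G -> G) (inv : G -> G) (e : G)
    (hG : is_lc_group mul inv e).

Lemma mulA x y z : mul x (mul y z) = mul (mul x y) z.
Proof. by case: hG. Qed.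
Lemma mul1g x : mul e x = x.
Proof. by case: hG => _ /(_ x) []. Qed.
Lemma mulg1 x : mul x e = x.
Proof. by case: hG => _ /(_ x) [_ []]. Qed.
Lemma mulVg x : mul (inv x) x = e.
Proof. by case: hG => _ /(_ x) [_ [_ []]]. Qed.

Lemma setmulE (K A : set G) :
  setmul mul K A = (fun p : G * G => mul p.1 p.2) @` (K `*` A).
Proof.
apply/seteqP; split => x.
  by case=> a Ka [b Ab <-]; exists (a, b).
by case=> -[a b] [/= Ka Ab] <-; exists a => //; exists b.
Qed.

Lemma compact_setmul (K A : set G) : compact K -> compact A ->
  compact (setmul mul K A).
Proof.
move=> cK cA; rewrite setmulE; apply: continuous_compact.
  by apply: continuous_subspaceT; case: hG => _ _ [].
exact: compact_setX.
Qed.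

Lemma rtransE (B : set G) x : rtrans mul B x = setmul mul B [set x].
Proof.
apply/seteqP; split => y.
  by case=> a Ba <-; exists a => //; exists x.
by case=> a Ba [b -> <-]; exists a.
Qed.

Lemma compact_rtrans (B : set G) x : compact B -> compact (rtrans mul B x).
Proof. by move=> cB; rewrite rtransE; apply: compact_setmul => //; exact: compact_set1. Qed.

Lemma compact_meas {S : set G} : compact S -> measurable (S : set (borelG G)).
Proof.
move=> cS; have cl : closed S by apply: compact_closed => //; case: hG.
rewrite -[S]setCK; apply: measurableC.
apply: sub_sigma_algebra; rewrite /=.
by rewrite openC.
Qed.

Lemma setmulA (A B C : set G) :
  setmul mul (setmul mul A B) C = setmul mul A (setmul mul B C).
Proof.
apply/seteqP; split => x.
  case=> _ [a Aa [b Bb <-]] [c Cc <-].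
  by exists a => //; exists (mul b c); [exists b => //; exists c|rewrite mulA].
case=> a Aa [_ [b Bb [c Cc <-]] <-].
by exists (mul a b); [exists a => //; exists b|exists c => //; rewrite mulA].
Qed.

Lemma setmul_sub (B A : set G) : B e -> A `<=` setmul mul B A.
Proof. by move=> Be a Aa; exists e => //; exists a => //; rewrite mul1g. Qed.

Lemma setmul_subl (B K : set G) : B e -> K `<=` setmul mul K B.
Proof. by move=> Be a Aa; exists a => //; exists e => //; rewrite mulg1. Qed.


Variables (m : {measure set (borelG G) -> \bar R}) (hm : haar_measure mul m)
  (hunim : unimodular mul m).

Lemma m_fin (S : set G) : compact S -> (m S < +oo)%E.
Proof. by case: hm => _ h _ _ _; apply: h. Qed.

Lemma csun_e {B : set G} : csun inv e B -> B e.
Proof. by case=> _ _ /nbhs_singleton. Qed.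

Lemma csun_c {B : set G} : csun inv e B -> compact B.
Proof. by case. Qed.

Lemma csun_sym (B : set G) b : csun inv e B -> B b -> B (inv b).
Proof. by case=> _ hs _ Bb; rewrite -hs; exists b. Qed.

Lemma m_pos {B : set G} : csun inv e B -> (0 < m B)%E.
Proof.
move=> hB; case: (hB) => cB _; rewrite nbhsE => -[U [oU Ue] UB].
apply: (lt_le_trans (y := m U)).
  by case: hm => _ _ h _ _; apply: h => //; exists e.
apply: le_measure; rewrite ?inE; last exact: UB.
  exact: sub_sigma_algebra.
exact: compact_meas.
Qed.

Lemma m_rtrans (B : set G) x : compact B -> m (rtrans mul B x) = m B.
Proof. by move=> cB; apply: hunim; apply: compact_meas. Qed.

Definition packing (B S : set G) n (f : nat -> G) :=
  (forall i, (i < n)%N -> S (f i)) /\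
  (forall i j, (i < n)%N -> (j < n)%N -> i <> j ->
     rtrans mul B (f i) `&` rtrans mul B (f j) = set0).

Lemma pack_sum (mu : {measure set (borelG G) -> \bar R}) {B S : set G} {n f} :
  compact B -> packing B S n f ->
  mu (\big[setU/set0]_(i < n) rtrans mul B (f i)) =
  (\sum_(i < n) mu (rtrans mul B (f i)))%E.
Proof.
move=> cB [_ hd].
rewrite (@measure_bigsetU_ord_cond _ _ _ mu n xpredT (fun i : 'I_n => rtrans mul B (f i))) //.
  by move=> i _; apply: compact_meas; apply: compact_rtrans.
move=> i j _ _ /set0P hne; apply: val_inj; apply: contrapT => hij.
move: hne; rewrite (hd i j) ?ltn_ord // eqxx; by [].
Qed.


Lemma finE {S : set G} : compact S -> m S = (fine (m S))%:E.
Proof. by move=> cS; rewrite fineK // ge0_fin_numE // m_fin. Qed.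

Lemma big_rtrans_sub (B S : set G) n f : (forall i, (i < n)%N -> S (f i)) ->
  \big[setU/set0]_(i < n) rtrans mul B (f i) `<=` setmul mul B S.
Proof.
move=> hS; rewrite -(bigcup_mkord n (fun i => rtrans mul B (f i))) => x [i /= ilt [b Bb <-]].
by exists b => //; exists (f i) => //; apply: hS.
Qed.

Lemma pack_bound {B S : set G} {n f} : csun inv e B -> compact S ->
  packing B S n f -> ((n%:R)%:E * m B <= m (setmul mul B S))%E.
Proof.
move=> hB cS hp; have cB := csun_c hB.
have <- : m (\big[setU/set0]_(i < n) rtrans mul B (f i)) = ((n%:R)%:E * m B)%E.
  rewrite (pack_sum _ cB hp).
  under eq_bigr do rewrite m_rtrans //.
  rewrite sumr_const card_ord (finE cB).
  apply: eq_trans (esym (EFin_natmul _ _)) _.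
  by rewrite -EFinM mulr_natl.
apply: le_measure; rewrite ?inE.
- apply: bigsetU_measurable => i _; apply: compact_meas.
  exact: compact_rtrans.
- by apply: compact_meas; apply: compact_setmul.
- by apply: big_rtrans_sub; case: hp.
Qed.


Lemma pack_exists {B S : set G} : csun inv e B -> compact S ->
  exists n f, packing B S n f /\
    S `<=` \big[setU/set0]_(i < n) rtrans mul (setmul mul B B) (f i).
Proof.
move=> hB cS; have cB := csun_c hB.
pose P n := `[< exists f, packing B S n f >].
have P0 : P 0 by apply/asboolP; exists (fun _ => e); split.
have cBS : compact (setmul mul B S) by apply: compact_setmul.
pose M := fine (m (setmul mul B S)); pose mb := fine (m B).
have mb0 : (0 < mb)%R.
  by rewrite /mb -lte_fin -finE //; apply: m_pos.
have M0 : (0 <= M)%R by rewrite /M fine_ge0.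
have ub : forall n, P n -> (n <= Num.bound (M / mb))%N.
  move=> n /asboolP [f hp]; have := pack_bound hB cS hp.
  rewrite (finE cB) (finE cBS) -EFinM lee_fin -/M -/mb => h.
  rewrite -(ler_nat R); apply: ltW.
  have hb : (M / mb < (Num.bound (M / mb))%:R)%R.
    by apply: archi_boundP; rewrite divr_ge0 // ltW.
  apply: le_lt_trans hb.
  by rewrite ler_pdivlMr.
have exP : exists n, P n by exists 0%N.
case: (ex_maxnP exP ub) => n /asboolP [f [hS hd]] hmax.
exists n, f; split; first by split.
move=> s Ss; rewrite -(bigcup_mkord n (fun i => rtrans mul (setmul mul B B) (f i))).
apply: contrapT => hns.
have disj : forall i, (i < n)%N -> rtrans mul B s `&` rtrans mul B (f i) = set0.
  move=> i ilt; apply/seteqP; split; last exact: sub0set.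
  move=> y [[b1 Bb1 hy1] [b2 Bb2 hy2]]; apply: hns; exists i => //.
  exists (mul (inv b1) b2); first by exists (inv b1); [apply: csun_sym | exists b2].
  by rewrite -mulA hy2 -hy1 mulA mulVg mul1g.
pose f' i := if i == n then s else f i.
have : P n.+1.
  apply/asboolP; exists f'; split.
    move=> i; rewrite ltnS leq_eqVlt /f' => /orP [/eqP ->|ilt]; first by rewrite eqxx.
    by rewrite (ltn_eqF ilt); apply: hS.
  move=> i j; rewrite !ltnS /f' => hi hj hij.
  case: (eqVneq i n) => [ein|ein]; case: (eqVneq j n) => [ejn|ejn].
  - by exfalso; apply: hij; rewrite ein ejn.
  - have jlt : (j < n)%N by rewrite ltn_neqAle ejn hj.
    by apply: disj.
  - have ilt : (i < n)%N by rewrite ltn_neqAle ein hi.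
    by rewrite setIC; apply: disj.
  - have jlt : (j < n)%N by rewrite ltn_neqAle ejn hj.
    have ilt : (i < n)%N by rewrite ltn_neqAle ein hi.
    by apply: hd.
by move/hmax; rewrite ltnn.
Qed.

Lemma sum_cst n (r : R) : (\sum_(i < n) r%:E)%E = (n%:R * r)%:E.
Proof.
rewrite sumr_const card_ord.
by apply: eq_trans (esym (EFin_natmul _ _)) _; rewrite mulr_natl.
Qed.

Lemma m_setmul_ge {B : set G} (A : set G) : csun inv e B -> compact A ->
  (m A <= m (setmul mul B A))%E.
Proof.
move=> hB cA; apply: le_measure; rewrite ?inE.
- exact: compact_meas.
- by apply: compact_meas; apply: compact_setmul => //; apply: csun_c.
- by apply: setmul_sub; apply: csun_e.
Qed.

Lemma upper (nu : {measure set (borelG G) -> \bar R}) (Bu : set G) (Cu : R)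
  (hBu : csun inv e Bu) (hCu : (0 < Cu)%R)
  (hu : forall x : G, (nu (rtrans mul (setmul mul Bu Bu) x) <= Cu%:E)%E)
  (S : set G) : compact S ->
  (nu S <= (Cu / fine (m Bu))%:E * m (setmul mul Bu S))%E.
Proof.
move=> cS; have cB := csun_c hBu.
have cBB : compact (setmul mul Bu Bu) by apply: compact_setmul.
case: (pack_exists hBu cS) => n [f [hp hcov]].
have h1 : (nu S <= (n%:R * Cu)%:E)%E.
  apply: le_trans.
    apply: (@content_subadditive _ _ _ nu _ (fun i => rtrans mul (setmul mul Bu Bu) (f i))).
    - by move=> k _; apply: compact_meas; apply: compact_rtrans.
    - exact: compact_meas.
    - exact: hcov.
  by rewrite -sum_cst; apply: lee_sum => i _; apply: hu.
apply: le_trans h1 _.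
have h2 := pack_bound hBu cS hp.
have mb0 : (0 < fine (m Bu))%R by rewrite -lte_fin -finE //; apply: m_pos.
have hc : (0 <= (Cu / fine (m Bu))%:E)%E by rewrite lee_fin divr_ge0 // ltW.
apply: le_trans (lee_wpmul2l hc h2).
rewrite (finE cB) -!EFinM lee_fin.
by rewrite /= mulrCA divfK ?gt_eqF.
Qed.

Lemma lower (nu : {measure set (borelG G) -> \bar R}) (Bl : set G) (Cl : R)
  (hBl : csun inv e Bl) (hCl : (0 < Cl)%R)
  (hl : forall x : G, (Cl%:E <= nu (rtrans mul Bl x))%E)
  (S : set G) : compact S ->
  ((Cl / fine (m (setmul mul Bl Bl)))%:E * m S <= nu (setmul mul Bl S))%E.
Proof.
move=> cS; have cB := csun_c hBl.
have cBB : compact (setmul mul Bl Bl) by apply: compact_setmul.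
case: (pack_exists hBl cS) => n [f [hp hcov]].
have mbb0 : (0 < fine (m (setmul mul Bl Bl)))%R.
  rewrite -lte_fin -finE //; apply: lt_le_trans (m_pos hBl) _.
  exact: m_setmul_ge.
have h1 : (m S <= (n%:R * fine (m (setmul mul Bl Bl)))%:E)%E.
  apply: le_trans.
    apply: (@content_subadditive _ _ _ m _ (fun i => rtrans mul (setmul mul Bl Bl) (f i))).
    - by move=> k _; apply: compact_meas; apply: compact_rtrans.
    - exact: compact_meas.
    - exact: hcov.
  rewrite -sum_cst; apply: lee_sum => i _.
  apply: (@le_trans _ _ (m (rtrans mul (setmul mul Bl Bl) (f i)))); first exact: lexx.
  by rewrite m_rtrans // -(finE cBB).
have h2 : ((n%:R * Cl)%:E <= nu (setmul mul Bl S))%E.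
  apply: le_trans (_ : nu (\big[setU/set0]_(i < n) rtrans mul Bl (f i)) <= _)%E.
    by rewrite (pack_sum _ cB hp) -sum_cst; apply: lee_sum => i _; apply: hl.
  apply: le_measure; rewrite ?inE.
  - apply: bigsetU_measurable => i _; apply: compact_meas.
    exact: compact_rtrans.
  - by apply: compact_meas; apply: compact_setmul.
  - by apply: big_rtrans_sub; case: hp.
apply: le_trans h2.
have hc : (0 <= (Cl / fine (m (setmul mul Bl Bl)))%:E)%E by rewrite lee_fin divr_ge0 // ltW.
apply: le_trans (lee_wpmul2l hc h1) _.
by rewrite -EFinM lee_fin mulrCA divfK ?gt_eqF.
Qed.


Lemma m_ltrans_ge (K A : set G) : K !=set0 -> compact K -> compact A ->
  (m A <= m (setmul mul K A))%E.
Proof.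
move=> [k Kk] cK cA; have [hinv _ _ _ _] := hm.
have cA' : compact (setmul mul [set k] A) by apply: compact_setmul => //; exact: compact_set1.
have -> : (m A = m (setmul mul [set k] A)).
  rewrite -(hinv k A (compact_meas cA)); congr (m _).
  apply/seteqP; split => x.
    by case=> a Aa <-; exists k => //; exists a.
  by case=> _ -> [a Aa <-]; exists a.
apply: le_measure; rewrite ?inE.
- exact: compact_meas.
- by apply: compact_meas; apply: compact_setmul.
- by move=> x [_ -> [a Aa <-]]; exists k => //; exists a.
Qed.

Lemma cK_setmull {B K : set G} : csun inv e B -> cK K -> cK (setmul mul B K).
Proof.
move=> hB [cK0 [k Kk]]; split; first by apply: compact_setmul => //; exact: csun_c.
by exists (mul e k); exists e; [exact: csun_e | exists k].
Qed.

Lemma cK_setmulr {B K : set G} : csun inv e B -> cK K -> cK (setmul mul K B).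
Proof.
move=> hB [cK0 [k Kk]]; split; first by apply: compact_setmul => //; exact: csun_c.
by exists (mul k e); exists k => //; exists e => //; exact: csun_e.
Qed.

Lemma cKp_setmul {B A : set G} : csun inv e B -> cKp m A -> cKp m (setmul mul B A).
Proof.
move=> hB [cA mA]; split; first by apply: compact_setmul => //; exact: csun_c.
by apply: lt_le_trans mA _; apply: m_setmul_ge.
Qed.

Lemma cKp_pos {A : set G} : cKp m A -> exists2 a : R, (0 < a)%R & m A = a%:E.
Proof.
move=> [cA mA]; exists (fine (m A)); last exact: finE.
by rewrite -lte_fin -finE.
Qed.

Lemma cKcKp_pos {K A : set G} : cK K -> cKp m A ->
  exists2 q : R, (0 < q)%R & m (setmul mul K A) = q%:E.
Proof.
move=> [cK0 K0] [cA mA]; apply: cKp_pos; split; first exact: compact_setmul.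
by apply: lt_le_trans mA _; apply: m_ltrans_ge.
Qed.


Lemma main (nu : {measure set (borelG G) -> \bar R})
    (Bl Bu : set G) (hBl : csun inv e Bl) (hBu : csun inv e Bu)
    (Cl Cu : R) (hCl : 0 < Cl) (hCu : 0 < Cu)
    (hl : forall x : G, (Cl%:E <= nu (rtrans mul Bl x))%E)
    (hu : forall x : G, (nu (rtrans mul (setmul mul Bu Bu) x) <= Cu%:E)%E) :
  [/\ (Cl%:E * inve (m (setmul mul Bl Bl)) * IG mul m <= Lminus mul m nu)%E,
      (Lminus mul m nu <= Cu%:E * inve (m Bu) * IG mul m)%E,
      (Cl%:E * inve (m (setmul mul Bl Bl)) * inve (IG mul m) <= Lplus mul m nu)%E &
      (Lplus mul m nu <= Cu%:E * inve (m Bu) * inve (IG mul m))%E].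
Proof.
have cBl := csun_c hBl; have cBu := csun_c hBu.
have cBB : compact (setmul mul Bl Bl) by apply: compact_setmul.
have mbb0 : (0 < fine (m (setmul mul Bl Bl)))%R.
  rewrite -lte_fin -finE //; apply: lt_le_trans (m_pos hBl) _.
  exact: m_setmul_ge.
have mb0 : (0 < fine (m Bu))%R by rewrite -lte_fin -finE //; apply: m_pos.
pose c1 := Cl / fine (m (setmul mul Bl Bl)).
pose c2 := Cu / fine (m Bu).
have c10 : (0 < c1)%R by rewrite divr_gt0.
have c20 : (0 < c2)%R by rewrite divr_gt0.
have E1 : (Cl%:E * inve (m (setmul mul Bl Bl)) = c1%:E)%E.
  by rewrite [in LHS](finE cBB) (invEpos _ mbb0) -EFinM.
have E2 : (Cu%:E * inve (m Bu) = c2%:E)%E.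
  by rewrite [in LHS](finE cBu) (invEpos _ mb0) -EFinM.
rewrite E1 E2.
pose a K := ereal_inf [set (m (setmul mul K A) * inve (m A))%E | A in cKp m].
pose b K := ereal_inf [set (nu (setmul mul K A) * inve (m A))%E | A in cKp m].
pose d K := ereal_sup [set (nu A * inve (m (setmul mul K A)))%E | A in cKp m].
have IGE : IG mul m = ereal_sup [set a K | K in @cK G] by [].
have LmE : Lminus mul m nu = ereal_sup [set b K | K in @cK G] by [].
have LpE : Lplus mul m nu = ereal_inf [set d K | K in @cK G] by [].
rewrite IGE LmE LpE.
have cKBu : cK Bu by split => //; exists e; exact: csun_e.
have cKpBu : cKp m Bu by split => //; exact: m_pos.
have ge0a : forall K, (0 <= a K)%E.
  by move=> K; apply: le_ereal_inf_tmp => _ [A _ <-]; rewrite mule_ge0 // inve_ge0.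
have ge0IG : (0 <= ereal_sup [set a K | K in @cK G])%E.
  by apply: le_trans (ge0a Bu) _; apply: ereal_sup_ubound; exists Bu.
have ge0d : forall K, (0 <= d K)%E.
  move=> K; apply: le_trans (_ : 0 <= nu Bu * inve (m (setmul mul K Bu)))%E _.
    by rewrite mule_ge0 // inve_ge0.
  by apply: ereal_sup_ubound; exists Bu.
have ge0Lp : (0 <= ereal_inf [set d K | K in @cK G])%E.
  by apply: le_ereal_inf_tmp => _ [K _ <-].
have aub : forall K A, cKp m A -> (a K <= m (setmul mul K A) * inve (m A))%E.
  by move=> K A hA; apply: ereal_inf_lbound; exists A.
split.
- rewrite -lee_pdivlMl //.
  apply: ge_ereal_sup => _ [K hK <-]; rewrite lee_pdivlMl //.
  apply: le_trans (_ : c1%:E * a K <= b (setmul mul Bl K))%E _; last first.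
    by apply: ereal_sup_ubound; exists (setmul mul Bl K) => //; exact: cK_setmull.
  apply: le_ereal_inf_tmp => _ [A hA <-].
  apply: le_trans (lee_wpmul2l _ (aub K A hA)) _; first by rewrite lee_fin ltW.
  rewrite setmulA muleA; apply: lee_wpmul2r; first by rewrite inve_ge0.
  by apply: lower => //; apply: compact_setmul; [case: hK|case: hA].
- apply: ge_ereal_sup => _ [K hK <-].
  apply: le_trans (_ : b K <= c2%:E * a (setmul mul Bu K))%E _; last first.
    apply: lee_wpmul2l; first by rewrite lee_fin ltW.
    by apply: ereal_sup_ubound; exists (setmul mul Bu K) => //; exact: cK_setmull.
  rewrite -lee_pdivrMl //.
  apply: le_ereal_inf_tmp => _ [A hA <-]; rewrite lee_pdivrMl //.
  apply: le_trans (_ : b K <= nu (setmul mul K A) * inve (m A))%E _.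
    by apply: ereal_inf_lbound; exists A.
  rewrite setmulA muleA; apply: lee_wpmul2r; first by rewrite inve_ge0.
  by apply: upper => //; apply: compact_setmul; [case: hK|case: hA].
- apply: le_ereal_inf_tmp => _ [K hK <-].
  have hKBl := cK_setmulr hBl hK.
  apply: le_trans (_ : c1%:E * inve (a (setmul mul K Bl)) <= d K)%E.
    apply: lee_wpmul2l; first by rewrite lee_fin ltW.
    by apply: inve_anti => //; apply: ereal_sup_ubound; exists (setmul mul K Bl).
  rewrite (gal2 _ _ _ c10 (ge0d K) (ge0a _)).
  apply: le_ereal_inf_tmp => _ [A hA <-].
  have hx : (0 <= m (setmul mul (setmul mul K Bl) A) * inve (m A))%E.
    by rewrite mule_ge0 // inve_ge0.
  rewrite -(gal2 _ _ _ c10 (ge0d K) hx).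
  apply: le_trans (_ : _ <= nu (setmul mul Bl A) * inve (m (setmul mul K (setmul mul Bl A))))%E _; last first.
    by apply: ereal_sup_ubound; exists (setmul mul Bl A) => //; exact: cKp_setmul.
  rewrite setmulA.
  have [a0 a0p mAE] := cKp_pos hA.
  have [q qp mqE] := cKcKp_pos hK (cKp_setmul hBl hA).
  have hlA := lower nu Bl Cl hBl hCl hl A (proj1 hA).
  rewrite mAE in hlA; rewrite mAE mqE.
  have hq : (0 <= inve q%:E)%E by rewrite inve_ge0 lee_fin ltW.
  apply: (le_trans _ (lee_wpmul2r hq hlA)).
  rewrite (invEpos _ a0p) (invEpos _ qp) -EFinM (invEpos (q * a0^-1)) ?mulr_gt0 ?invr_gt0 // -!EFinM lee_fin.
  by rewrite invfM invrK mulrA mulrAC.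
- rewrite (gal _ _ _ c20 ge0Lp ge0IG).
  apply: ge_ereal_sup => _ [K hK <-]; rewrite -(gal _ _ _ c20 ge0Lp (ge0a K)).
  have hKBu := cK_setmulr hBu hK.
  apply: le_trans (_ : _ <= d (setmul mul K Bu))%E _.
    by apply: ereal_inf_lbound; exists (setmul mul K Bu).
  apply: ge_ereal_sup => _ [A hA <-].
  have hBuA := cKp_setmul hBu hA.
  apply: le_trans (_ : _ <= c2%:E * inve (m (setmul mul K (setmul mul Bu A)) * inve (m (setmul mul Bu A))))%E _; last first.
    apply: lee_wpmul2l; first by rewrite lee_fin ltW.
    apply: inve_anti; first exact: ge0a.
    by apply: ereal_inf_lbound; exists (setmul mul Bu A).
  rewrite setmulA.
  have [a0 a0p mAE] := cKp_pos hBuA.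
  have [q qp mqE] := cKcKp_pos hK hBuA.
  have huA := upper nu Bu Cu hBu hCu hu A (proj1 hA).
  rewrite mAE in huA; rewrite mAE mqE.
  have hq : (0 <= inve q%:E)%E by rewrite inve_ge0 lee_fin ltW.
  apply: le_trans (lee_wpmul2r hq huA) _.
  rewrite (invEpos _ a0p) (invEpos _ qp) -EFinM (invEpos (q * a0^-1)) ?mulr_gt0 ?invr_gt0 // -!EFinM lee_fin.
  by rewrite invfM invrK mulrA mulrAC.
Qed.

End Grp.

Theorem lemma3p7 (R : realType) (G : ptopologicalType)
    (mul : G -> G -> G) (inv : G -> G) (e : G)
    (hG : is_lc_group mul inv e)
    (m : {measure set (borelG G) -> \bar R})
    (hm : haar_measure mul m) (hunim : unimodular mul m)
    (nu : {measure set (borelG G) -> \bar R})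
    (hnu : delone_measure mul inv e nu)
    (Bl Bu : set G) (hBl : csun inv e Bl) (hBu : csun inv e Bu)
    (Cl Cu : R) (hCl : 0 < Cl) (hCu : 0 < Cu)
    (hl : forall x : G, (Cl%:E <= nu (rtrans mul Bl x))%E)
    (hu : forall x : G, (nu (rtrans mul (setmul mul Bu Bu) x) <= Cu%:E)%E) :
  [/\ (Cl%:E * inve (m (setmul mul Bl Bl)) * IG mul m <= Lminus mul m nu)%E,
      (Lminus mul m nu <= Cu%:E * inve (m Bu) * IG mul m)%E,
      (Cl%:E * inve (m (setmul mul Bl Bl)) * inve (IG mul m) <= Lplus mul m nu)%E &
      (Lplus mul m nu <= Cu%:E * inve (m Bu) * inve (IG mul m))%E].
Proof.
exact: (@main R G mul inv e hG m hm hunim nu Bl Bu hBl hBu Cl Cu hCl hCu hl hu).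
Qed.
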